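(* Let $j\geq 7$ and $\mu_1,\mu_2>0$. Then for every integer $l$ with $2\leq l\leq \lfloor (j+1)/2\rfloor$ one has $\mathbf{g}_1(j,l)>0$ and $\chi(j,l):=\mu_1\mu_2\left[\mathbf{g}_1(j,l)^2+\mathbf{g}_2(j)^2-\mathbf{g}_3(j,l)^2\right]+(\mu_1^2+\mu_2^2)\,\mathbf{g}_1(j,l)\,\mathbf{g}_2(j)>0 .$
   Context: For $\varphi\in\mathbb{R}\setminus2\pi\mathbb{Z}$ let $\mathbf{f}(\varphi)=\frac{1}{8|\sin(\varphi/2)|}\left(\frac{2}{\sin^2(\varphi/2)}-1\right)+\cos\varphi$. Define $\mathbf{g}_1(j,l)=\sum_{k=1}^{j-1}\mathbf{f}(\frac{2k\pi}{j})(1-\cos\frac{2(l-1)k\pi}{j})$, $\mathbf{g}_2(j)=\sum_{k=1}^{j}\mathbf{f}(\frac{(2k-1)\pi}{j})$, $\mathbf{g}_3(j,l)=\sum_{k=1}^{j}\mathbf{f}(\frac{(2k-1)\pi}{j})\cos\frac{(l-1)(2k-1)\pi}{j}$. *)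

(* Defs.v *)
From Stdlib Require Import Reals Lra Lia.
Open Scope R_scope.

Fixpoint sum1 (n : nat) (F : nat -> R) : R :=
  match n with
  | O => 0
  | S m => sum1 m F + F n
  end.

Definition f (phi : R) : R :=
  1 / (8 * Rabs (sin (phi / 2))) * (2 / (sin (phi / 2)) ^ 2 - 1) + cos phi.

Definition g1 (j l : nat) : R :=
  sum1 (j - 1) (fun k => f (2 * INR k * PI / INR j)
                         * (1 - cos (2 * (INR l - 1) * INR k * PI / INR j))).

Definition g2 (j : nat) : R :=
  sum1 j (fun k => f ((2 * INR k - 1) * PI / INR j)).

Definition g3 (j l : nat) : R :=
  sum1 j (fun k => f ((2 * INR k - 1) * PI / INR j)
                   * cos ((INR l - 1) * (2 * INR k - 1) * PI / INR j)).

Definition chi (mu1 mu2 : R) (j l : nat) : R :=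
  mu1 * mu2 * (g1 j l ^ 2 + g2 j ^ 2 - g3 j l ^ 2)
  + (mu1 ^ 2 + mu2 ^ 2) * g1 j l * g2 j.

(* Main.v *)
Require Import Defs.
From Stdlib Require Import Reals Lra Lia.
Open Scope R_scope.

Lemma sum1_ext n F G : (forall k, (1 <= k <= n)%nat -> F k = G k) -> sum1 n F = sum1 n G.
Proof.
  induction n; intros H; simpl; [reflexivity|].
  rewrite IHn by (intros; apply H; lia). rewrite H by lia. reflexivity.
Qed.

Lemma sum1_le n F G : (forall k, (1 <= k <= n)%nat -> F k <= G k) -> sum1 n F <= sum1 n G.
Proof.
  induction n; intros H; simpl; [lra|].
  assert (sum1 n F <= sum1 n G) by (apply IHn; intros; apply H; lia).
  assert (F (S n) <= G (S n)) by (apply H; lia). lra.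
Qed.

Lemma sum1_plus n F G : sum1 n (fun k => F k + G k) = sum1 n F + sum1 n G.
Proof. induction n; simpl; [lra|]. rewrite IHn; lra. Qed.

Lemma sum1_minus n F G : sum1 n (fun k => F k - G k) = sum1 n F - sum1 n G.
Proof. induction n; simpl; [lra|]. rewrite IHn; lra. Qed.

Lemma sum1_scal n c F : sum1 n (fun k => c * F k) = c * sum1 n F.
Proof. induction n; simpl; [lra|]. rewrite IHn; lra. Qed.

Lemma sum1_const n c : sum1 n (fun _ => c) = INR n * c.
Proof. induction n; simpl sum1; [simpl; lra|]. rewrite IHn, S_INR; lra. Qed.

Lemma sum1_nonneg n F : (forall k, (1 <= k <= n)%nat -> 0 <= F k) -> 0 <= sum1 n F.
Proof.
  intros H. replace 0 with (sum1 n (fun _ => 0)). apply sum1_le; auto.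
  rewrite sum1_const; lra.
Qed.

Lemma sum1_pos n F : (1 <= n)%nat -> (forall k, (1 <= k <= n)%nat -> 0 <= F k) -> 0 < F 1%nat -> 0 < sum1 n F.
Proof.
  induction n; intros Hn H H1; [lia|].
  destruct n.
  - simpl. lra.
  - change (sum1 (S (S n)) F) with (sum1 (S n) F + F (S (S n))).
    assert (0 < sum1 (S n) F) by (apply IHn; [lia | intros; apply H; lia | exact H1]).
    assert (0 <= F (S (S n))) by (apply H; lia). lra.
Qed.

Lemma sum1_shift n F : sum1 (S n) F = F 1%nat + sum1 n (fun k => F (S k)).
Proof.
  induction n; simpl; [lra|]. simpl in IHn. rewrite IHn. lra.
Qed.

Lemma sum1_rev n F : sum1 n F = sum1 n (fun k => F (S n - k)%nat).
Proof.
  induction n; [reflexivity|].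
  change (sum1 (S n) F) with (sum1 n F + F (S n)).
  rewrite (sum1_shift n (fun k => F (S (S n) - k)%nat)), IHn.
  replace (S (S n) - 1)%nat with (S n) by lia.
  rewrite Rplus_comm. reflexivity.
Qed.

Lemma tele a b N : 2 * sin (a/2) * sum1 N (fun k => cos (b + INR k * a))
   = sin (b + (INR N + /2) * a) - sin (b + a/2).
Proof.
  induction N.
  - simpl. replace (b + (0 + /2) * a) with (b + a/2) by field. ring.
  - change (sum1 (S N) (fun k => cos (b + INR k * a))) with
      (sum1 N (fun k => cos (b + INR k * a)) + cos (b + INR (S N) * a)).
    rewrite Rmult_plus_distr_l, IHN, S_INR.
    set (c := b + (INR N + 1) * a).
    replace (b + (INR N + 1 + /2) * a) with (c + a/2) by (unfold c; field).
    replace (b + (INR N + /2) * a) with (c - a/2) by (unfold c; field).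
    rewrite (sin_plus c (a/2)), (sin_minus c (a/2)). ring.
Qed.

Lemma frac_lt_PI x y : 0 < x -> x < y -> x * PI / y < PI.
Proof.
  intros Hx Hxy. pose proof PI_RGT_0.
  apply Rmult_lt_reg_r with y; [lra|].
  unfold Rdiv. rewrite Rmult_assoc, Rinv_l, Rmult_1_r by lra. nra.
Qed.

Lemma frac_pos x y : 0 < x -> 0 < y -> 0 < x * PI / y.
Proof.
  intros. pose proof PI_RGT_0. unfold Rdiv. apply Rmult_lt_0_compat; [nra|].
  apply Rinv_0_lt_compat; lra.
Qed.

Lemma sin_qj_pos (q j : nat) : (0 < q < j)%nat -> 0 < sin (INR q * PI / INR j).
Proof.
  intros H. assert (0 < INR q) by (apply lt_0_INR; lia).
  assert (INR q < INR j) by (apply lt_INR; lia).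
  apply sin_gt_0; [apply frac_pos | apply frac_lt_PI]; lra.
Qed.

Lemma sumA (q j : nat) : (0 < q < j)%nat ->
  sum1 (j - 1) (fun k => cos (INR q * (2 * INR k * PI / INR j))) = -1.
Proof.
  intros H. assert (Hj : 0 < INR j) by (apply lt_0_INR; lia).
  set (a := 2 * INR q * PI / INR j).
  rewrite (sum1_ext _ _ (fun k => cos (0 + INR k * a))).
  2:{ intros k _. f_equal. unfold a. field. lra. }
  pose proof (tele a 0 (j - 1)) as T.
  pose proof (sin_qj_pos q j H) as Hs.
  replace (a / 2) with (INR q * PI / INR j) in T by (unfold a; field; lra).
  rewrite minus_INR in T by lia. change (INR 1) with 1 in T.
  replace (0 + (INR j - 1 + / 2) * a) with (- (INR q * PI / INR j) + 2 * INR q * PI) in T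
    by (unfold a; field; lra).
  rewrite sin_period, sin_neg, Rplus_0_l in T.
  apply Rmult_eq_reg_l with (2 * sin (INR q * PI / INR j)); [|lra].
  rewrite T. ring.
Qed.

Lemma sumB (q j : nat) : (0 < q < j)%nat ->
  sum1 j (fun k => cos (INR q * ((2 * INR k - 1) * PI / INR j))) = 0.
Proof.
  intros H. assert (Hj : 0 < INR j) by (apply lt_0_INR; lia).
  set (a := 2 * INR q * PI / INR j).
  set (b := - (INR q * PI / INR j)).
  rewrite (sum1_ext _ _ (fun k => cos (b + INR k * a))).
  2:{ intros k _. f_equal. unfold a, b. field. lra. }
  pose proof (tele a b j) as T.
  pose proof (sin_qj_pos q j H) as Hs.
  replace (a / 2) with (INR q * PI / INR j) in T by (unfold a; field; lra).
  replace (b + (INR j + / 2) * a) with (0 + 2 * INR q * PI) in T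
    by (unfold a, b; field; lra).
  replace (b + INR q * PI / INR j) with 0 in T by (unfold b; ring).
  rewrite sin_period, sin_0 in T.
  apply Rmult_eq_reg_l with (2 * sin (INR q * PI / INR j)); [|lra].
  rewrite T. ring.
Qed.

Lemma PI_bounds : 314159/100000 < PI < 31416/10000.
Proof.
  pose proof (PI_2_3_7_ineq 2) as [H1 H2].
  unfold sum_f_R0, tg_alt, PI_2_3_7_tg, Ratan_seq in H1, H2. simpl in H1, H2.
  split; lra.
Qed.

Lemma sin_T5 x : 0 <= x -> x <= PI -> sin x <= x - x^3/6 + x^5/120.
Proof.
  intros H1 H2. pose proof (sin_bound x 0 H1 H2) as [_ H].
  unfold sin_approx, sum_f_R0, sin_term in H. simpl in H. lra.
Qed.

Lemma sin_le_x x : 0 <= x -> x <= PI -> sin x <= x.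
Proof.
  intros H1 H2. pose proof (sin_T5 x H1 H2). pose proof PI_bounds.
  assert (x^3/6 >= x^5/120).
  { assert (x*x <= 16) by nra.
    assert (0 <= x^3) by (apply pow_le; lra).
    replace (x^5) with (x^3 * (x*x)) by ring. nra. }
  lra.
Qed.

Definition h (phi : R) : R :=
  1 / (8 * Rabs (sin (phi / 2))) * (2 / (sin (phi / 2)) ^ 2 - 1).

Lemma f_h (phi : R) : Defs.f phi = h phi + cos phi.
Proof. reflexivity. Qed.

Lemma h_pos (phi : R) : sin (phi/2) <> 0 -> 0 < h phi.
Proof.
  intros H. unfold h. set (s := sin (phi/2)) in *.
  pose proof (SIN_bound (phi/2)) as B. fold s in B.
  assert (0 < Rabs s) by (apply Rabs_pos_lt; auto).
  assert (0 < s^2 <= 1) by (split; nra).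
  apply Rmult_lt_0_compat.
  - apply Rdiv_lt_0_compat; lra.
  - assert (2 / s^2 >= 2). { apply Rle_ge. apply Rmult_le_reg_r with (s^2); [lra|].
      unfold Rdiv. rewrite Rmult_assoc, Rinv_l, Rmult_1_r by lra. nra. }
    lra.
Qed.

Lemma one_m_cos y : 1 - cos y = 2 * (sin (y/2))^2.
Proof. replace y with (2 * (y/2)) at 1 by field. rewrite cos_2a_sin. ring. Qed.

Lemma one_p_cos y : 1 + cos y = 2 * (cos (y/2))^2.
Proof. replace y with (2 * (y/2)) at 1 by field. rewrite cos_2a_cos. ring. Qed.

Definition Fn (s : R) : R := 2 / s - s.

Lemma h_1mcos (phi : R) : 0 < sin (phi/2) -> h phi * (1 - cos phi) = Fn (sin (phi/2)) / 4.
Proof.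
  intros H. rewrite one_m_cos. unfold h, Fn. rewrite Rabs_pos_eq by lra. field. lra.
Qed.

Lemma h_1pcos (phi : R) : sin (phi/2) <> 0 -> 0 <= h phi * (1 + cos phi).
Proof.
  intros H. rewrite one_p_cos. pose proof (h_pos phi H).
  apply Rmult_le_pos; [lra|]. apply Rmult_le_pos; [lra| apply pow2_ge_0].
Qed.

Lemma cos_prod a b : cos a * cos b = (cos (b + a) + cos (b - a)) / 2.
Proof. rewrite cos_plus, cos_minus. field. Qed.

Section G.
Variables j l : nat.
Hypothesis Hl : (2 <= l)%nat.
Hypothesis Hlj : (l < j)%nat.

Let x k := 2 * INR k * PI / INR j.
Let th k := (2 * INR k - 1) * PI / INR j.
Let m := INR l - 1.

Lemma Hj0 : 0 < INR j.
Proof. apply lt_0_INR; lia. Qed.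

Lemma g1_split : g1 j l = sum1 (j-1) (fun k => h (x k) * (1 - cos (m * x k)))
   + sum1 (j-1) (fun k => cos (INR 1 * x k))
   - / 2 * sum1 (j-1) (fun k => cos (INR l * x k))
   - / 2 * sum1 (j-1) (fun k => cos (INR (l-2) * x k)).
Proof.
  pose proof Hj0.
  unfold g1. rewrite <- !sum1_scal, <- !sum1_plus, <- !sum1_minus.
  apply sum1_ext. intros k _.
  rewrite f_h. rewrite minus_INR by lia.
  replace (2 * (INR l - 1) * INR k * PI / INR j) with (m * x k) by (unfold m, x; field; lra).
  fold (x k).
  replace (INR 1 * x k) with (x k) by (simpl; ring).
  rewrite (Rmult_plus_distr_r).
  replace (cos (x k) * (1 - cos (m * x k))) with (cos (x k) - cos (x k) * cos (m * x k)) by ring.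
  rewrite cos_prod. 
  replace (m * x k + x k) with (INR l * x k) by (unfold m; ring).
  replace (m * x k - x k) with ((INR l - INR 2) * x k) by (unfold m; simpl; ring).
  field.
Qed.

Lemma g2_split : g2 j = sum1 j (fun k => h (th k)) + sum1 j (fun k => cos (INR 1 * th k)).
Proof.
  unfold g2. rewrite <- sum1_plus. apply sum1_ext. intros k _.
  rewrite f_h. replace (INR 1 * th k) with (th k) by (simpl; ring). reflexivity.
Qed.

Lemma g3_split : g3 j l = sum1 j (fun k => h (th k) * cos (m * th k))
   + / 2 * sum1 j (fun k => cos (INR l * th k))
   + / 2 * sum1 j (fun k => cos (INR (l-2) * th k)).
Proof.
  pose proof Hj0.
  unfold g3. rewrite <- !sum1_scal, <- !sum1_plus.
  apply sum1_ext. intros k _.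
  rewrite f_h. rewrite minus_INR by lia.
  replace ((INR l - 1) * (2 * INR k - 1) * PI / INR j) with (m * th k) by (unfold m, th; field; lra).
  fold (th k).
  rewrite Rmult_plus_distr_r, cos_prod.
  replace (m * th k + th k) with (INR l * th k) by (unfold m; ring).
  replace (m * th k - th k) with ((INR l - INR 2) * th k) by (unfold m; simpl; ring).
  field.
Qed.

End G.

Lemma inv_sin_lb y : 0 < y < PI -> / y + / (PI - y) - 2 / PI <= / sin y.
Proof.
  intros [H1 H2]. pose proof PI_bounds.
  assert (Hs : 0 < sin y) by (apply sin_gt_0; lra).
  assert (S1 : sin y <= y) by (apply sin_le_x; lra).
  assert (S2 : sin y <= PI - y) by (rewrite <- sin_PI_x; apply sin_le_x; lra).
  assert (I1 : / y <= / sin y) by (apply Rinv_le_contravar; lra).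
  assert (I2 : / (PI - y) <= / sin y) by (apply Rinv_le_contravar; lra).
  destruct (Rle_dec y (PI/2)).
  - assert (/ (PI - y) <= 2 / PI).
    { replace (2/PI) with (/ (PI/2)) by (field; lra). apply Rinv_le_contravar; lra. }
    lra.
  - assert (/ y <= 2 / PI).
    { replace (2/PI) with (/ (PI/2)) by (field; lra). apply Rinv_le_contravar; lra. }
    lra.
Qed.

Lemma Fn_lb y : 0 < y < PI -> 2 * / y + 2 * / (PI - y) - 4 / PI - 1 <= Fn (sin y).
Proof.
  intros H. pose proof (inv_sin_lb y H). pose proof (SIN_bound y). unfold Fn.
  unfold Rdiv in *. lra.
Qed.

Definition Hs n := sum1 n (fun k => / INR k).
Definition Os n := sum1 n (fun k => / (2 * INR k - 1)).

Lemma Hs_mono m n : (m <= n)%nat -> Hs m <= Hs n.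
Proof.
  intros H. induction H; [lra|]. unfold Hs in *.
  change (sum1 (S m0) (fun k => / INR k)) with (sum1 m0 (fun k => / INR k) + / INR (S m0)).
  assert (0 < / INR (S m0)) by (apply Rinv_0_lt_compat, lt_0_INR; lia). lra.
Qed.

Lemma Os_mono m n : (m <= n)%nat -> Os m <= Os n.
Proof.
  intros H. induction H; [lra|]. unfold Os in *.
  change (sum1 (S m0) (fun k => / (2 * INR k - 1))) with (sum1 m0 (fun k => / (2 * INR k - 1)) + / (2 * INR (S m0) - 1)).
  assert (1 <= INR (S m0)) by (apply (le_INR 1); lia).
  assert (0 < / (2 * INR (S m0) - 1)) by (apply Rinv_0_lt_compat; lra). lra.
Qed.

Lemma Hs14 : 3.2515 <= Hs 14.
Proof. unfold Hs. cbn [sum1]. rewrite !INR_IZR_INZ. simpl Z.of_nat. lra. Qed.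
Lemma Hs17 : 3.4395 <= Hs 17.
Proof. unfold Hs. cbn [sum1]. rewrite !INR_IZR_INZ. simpl Z.of_nat. lra. Qed.
Lemma Os5 : 1.787 <= Os 5.
Proof. unfold Os. cbn [sum1]. rewrite !INR_IZR_INZ. simpl Z.of_nat. lra. Qed.

Lemma even_general j : (15 <= j)%nat -> 2 * INR j < sum1 (j-1) (fun k => Fn (sin (INR k * PI / INR j))).
Proof.
  intros Hj. pose proof PI_bounds as [Pl Pu].
  assert (J15 : 15 <= INR j) by (apply (le_INR 15) in Hj; simpl in Hj; lra).
  set (c := 2 * INR j / PI).
  assert (L : sum1 (j-1) (fun k => c * / INR k + c * / INR (j - k) + (- (4/PI) - 1))
     <= sum1 (j-1) (fun k => Fn (sin (INR k * PI / INR j)))).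
  { apply sum1_le. intros k Hk.
    assert (0 < INR k) by (apply lt_0_INR; lia).
    assert (INR k < INR j) by (apply lt_INR; lia).
    assert (Hy : 0 < INR k * PI / INR j < PI) by (split; [apply frac_pos|apply frac_lt_PI]; lra).
    pose proof (Fn_lb _ Hy) as F.
    replace (2 * / (INR k * PI / INR j)) with (c * / INR k) in F by (unfold c; field; lra).
    replace (PI - INR k * PI / INR j) with (INR (j - k) * PI / INR j) in F
      by (rewrite minus_INR by lia; field; lra).
    assert (0 < INR (j - k)) by (apply lt_0_INR; lia).
    replace (2 * / (INR (j - k) * PI / INR j)) with (c * / INR (j - k)) in F by (unfold c; field; lra).
    unfold Rdiv in *. lra. }
  rewrite !sum1_plus, !sum1_scal, sum1_const in L.
  assert (R : sum1 (j - 1) (fun k => / INR (j - k)) = Hs (j - 1)).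
  { unfold Hs. rewrite (sum1_rev (j-1) (fun k => / INR k)). apply sum1_ext. intros k Hk.
    f_equal. f_equal. lia. }
  rewrite R in L. fold (Hs (j-1)) in L.
  rewrite minus_INR in L by lia. change (INR 1) with 1 in L. set (J := INR j) in *.
  set (H := Hs (j-1)) in *.
  assert (HJ : 0 < J) by lra.
  assert (Key : 2 * J * PI < 4 * J * H - 4 * (J - 1) - (J - 1) * PI).
  { assert (JP : J * PI <= J * 3.1416) by (apply Rmult_le_compat_l; lra).
    destruct (Nat.le_gt_cases 18 j) as [Hb|Hb].
    - assert (Hh : 3.4395 <= H) by (unfold H; eapply Rle_trans; [apply Hs17| apply Hs_mono; lia]).
      assert (J * 3.4395 <= J * H) by (apply Rmult_le_compat_l; lra). nra.
    - assert (J17 : J <= 17) by (unfold J; replace 17 with (INR 17) by (simpl; lra); apply le_INR; lia).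
      assert (Hh : 3.2515 <= H) by (unfold H; eapply Rle_trans; [apply Hs14| apply Hs_mono; lia]).
      assert (J * 3.2515 <= J * H) by (apply Rmult_le_compat_l; lra). nra. }
  eapply Rlt_le_trans; [|exact L].
  unfold c. apply Rmult_lt_reg_r with PI; [lra|].
  replace ((2 * J / PI * H + 2 * J / PI * H + (J - 1) * (- (4 / PI) - 1)) * PI)
    with (4 * J * H - 4 * (J - 1) - (J - 1) * PI) by (field; lra).
  lra.
Qed.

Lemma odd_general j : (5 <= j)%nat -> 2 * INR j < sum1 j (fun k => Fn (sin ((2 * INR k - 1) * PI / INR j / 2))).
Proof.
  intros Hj. pose proof PI_bounds as [Pl Pu].
  assert (J5 : 5 <= INR j) by (apply (le_INR 5) in Hj; simpl in Hj; lra).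
  set (c := 4 * INR j / PI).
  assert (L : sum1 j (fun k => c * / (2 * INR k - 1) + c * / (2 * INR (S j - k) - 1) + (- (4/PI) - 1))
     <= sum1 j (fun k => Fn (sin ((2 * INR k - 1) * PI / INR j / 2)))).
  { apply sum1_le. intros k Hk.
    assert (1 <= INR k) by (apply (le_INR 1); lia).
    assert (INR k <= INR j) by (apply le_INR; lia).
    assert (Hy : 0 < (2 * INR k - 1) * PI / INR j / 2 < PI).
    { replace ((2 * INR k - 1) * PI / INR j / 2) with ((2 * INR k - 1) * PI / (2 * INR j)) by (field; lra).
      split; [apply frac_pos|apply frac_lt_PI]; lra. }
    pose proof (Fn_lb _ Hy) as F.
    replace (2 * / ((2 * INR k - 1) * PI / INR j / 2)) with (c * / (2 * INR k - 1)) in F by (unfold c; field; lra).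
    assert (E : INR (S j - k) = INR j + 1 - INR k) by (rewrite minus_INR by lia; rewrite S_INR; ring).
    replace (PI - (2 * INR k - 1) * PI / INR j / 2) with ((2 * INR (S j - k) - 1) * PI / INR j / 2) in F
      by (rewrite E; field; lra).
    replace (2 * / ((2 * INR (S j - k) - 1) * PI / INR j / 2)) with (c * / (2 * INR (S j - k) - 1)) in F
      by (rewrite E; unfold c; field; lra).
    unfold Rdiv in *. lra. }
  rewrite !sum1_plus, !sum1_scal, sum1_const in L.
  assert (R : sum1 j (fun k => / (2 * INR (S j - k) - 1)) = Os j).
  { unfold Os. rewrite (sum1_rev j (fun k => / (2 * INR k - 1))). reflexivity. }
  rewrite R in L. fold (Os j) in L. set (J := INR j) in *.
  set (O := Os j) in *.
  assert (HJ : 0 < J) by lra.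
  assert (Key : 2 * J * PI < 8 * J * O - 4 * J - J * PI).
  { assert (JP : J * PI <= J * 3.1416) by (apply Rmult_le_compat_l; lra).
    assert (Hh : 1.787 <= O) by (unfold O; eapply Rle_trans; [apply Os5| apply Os_mono; lia]).
    assert (J * 1.787 <= J * O) by (apply Rmult_le_compat_l; lra). nra. }
  eapply Rlt_le_trans; [|exact L].
  unfold c. apply Rmult_lt_reg_r with PI; [lra|].
  replace ((4 * J / PI * O + 4 * J / PI * O + J * (- (4 / PI) - 1)) * PI)
    with (8 * J * O - 4 * J - J * PI) by (field; lra).
  lra.
Qed.

Lemma term_lb (k j : nat) (v d : R) : (0 < k)%nat -> (2 * k <= j)%nat ->
  (INR k * (31416/10000) / INR j) - (INR k * (314159/100000) / INR j)^3/6
     + (INR k * (31416/10000) / INR j)^5/120 <= v ->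
  d * v + v * v <= 2 -> d <= Fn (sin (INR k * PI / INR j)).
Proof.
  intros Hk Hkj Hu Hd. pose proof PI_bounds as [Pl Pu].
  assert (Hk0 : 0 < INR k) by (apply lt_0_INR; lia).
  assert (Hj0 : 0 < INR j) by (apply lt_0_INR; lia).
  assert (Hkj' : 2 * INR k <= INR j).
  { replace 2 with (INR 2) by (simpl; lra). rewrite <- mult_INR. apply le_INR; lia. }
  set (y := INR k * PI / INR j).
  assert (Hy0 : 0 < y) by (apply frac_pos; lra).
  assert (HyP : y <= PI / 2).
  { unfold y. apply Rmult_le_reg_r with (INR j); [lra|].
    unfold Rdiv. rewrite Rmult_assoc, Rinv_l, Rmult_1_r by lra. nra. }
  set (a := INR k * (314159/100000) / INR j) in *.
  set (b := INR k * (31416/10000) / INR j) in *.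
  assert (Ha : 0 <= a <= y).
  { unfold a, y. unfold Rdiv. split.
    - apply Rmult_le_pos; [nra| left; apply Rinv_0_lt_compat; lra].
    - apply Rmult_le_compat_r; [left; apply Rinv_0_lt_compat; lra|]. nra. }
  assert (Hb : y <= b).
  { unfold b, y. unfold Rdiv. apply Rmult_le_compat_r; [left; apply Rinv_0_lt_compat; lra|]. nra. }
  assert (Hs : sin y <= y - y^3/6 + y^5/120) by (apply sin_T5; lra).
  assert (H3 : a^3 <= y^3) by (apply pow_incr; lra).
  assert (H5 : y^5 <= b^5) by (apply pow_incr; lra).
  assert (Hs0 : 0 < sin y) by (apply sin_gt_0; lra).
  assert (Hsv : sin y <= v) by lra.
  unfold Fn.
  assert (2 / v - v <= 2 / sin y - sin y).
  { assert (2 / v <= 2 / sin y).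
    { unfold Rdiv. apply Rmult_le_compat_l; [lra|]. apply Rinv_le_contravar; lra. }
    lra. }
  assert (d <= 2 / v - v).
  { apply Rmult_le_reg_r with v; [lra|]. unfold Rdiv. rewrite Rmult_minus_distr_r, Rmult_assoc, Rinv_l by lra. lra. }
  lra.
Qed.

Lemma term_lb_sym (k j : nat) (v d : R) : (0 < j - k)%nat -> (k < j)%nat -> (2 * (j - k) <= j)%nat ->
  (INR (j-k) * (31416/10000) / INR j) - (INR (j-k) * (314159/100000) / INR j)^3/6
     + (INR (j-k) * (31416/10000) / INR j)^5/120 <= v ->
  d * v + v * v <= 2 -> d <= Fn (sin (INR k * PI / INR j)).
Proof.
  intros H1 H2 H3 H4 H5.
  replace (sin (INR k * PI / INR j)) with (sin (INR (j - k) * PI / INR j)).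
  - apply term_lb with v; auto.
  - rewrite <- sin_PI_x. f_equal. rewrite minus_INR by lia.
    assert (0 < INR j) by (apply lt_0_INR; lia). field. lra.
Qed.

Lemma test_unused : 2.3 <= Fn (sin (INR 1 * PI / INR 7)).
Proof.
  apply term_lb with 0.43395; [lia|lia| |lra].
  rewrite !INR_IZR_INZ. simpl Z.of_nat. field_simplify. lra.
Qed.

Ltac chk := rewrite !INR_IZR_INZ; simpl Z.of_nat; field_simplify; lra.
Lemma even_small_7 : 2 * INR 7 < sum1 (7-1) (fun k => Fn (sin (INR k * PI / INR 7))).
Proof.
  assert (T1 : 4.1753 <= Fn (sin (INR 1 * PI / INR 7))) by (apply term_lb with 0.43390; [lia|lia|chk|lra]).
  assert (T2 : 1.7757 <= Fn (sin (INR 2 * PI / INR 7))) by (apply term_lb with 0.78194; [lia|lia|chk|lra]).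
  assert (T3 : 1.0715 <= Fn (sin (INR 3 * PI / INR 7))) by (apply term_lb with 0.97650; [lia|lia|chk|lra]).
  assert (T4 : 1.0715 <= Fn (sin (INR 4 * PI / INR 7))) by (apply term_lb_sym with 0.97650; [lia|lia|lia|chk|lra]).
  assert (T5 : 1.7757 <= Fn (sin (INR 5 * PI / INR 7))) by (apply term_lb_sym with 0.78194; [lia|lia|lia|chk|lra]).
  assert (T6 : 4.1753 <= Fn (sin (INR 6 * PI / INR 7))) by (apply term_lb_sym with 0.43390; [lia|lia|lia|chk|lra]).
  assert (E : INR 7 = 7) by (rewrite INR_IZR_INZ; reflexivity).
  cbn [sum1 Nat.sub]. lra.
Qed.

Lemma even_small_8 : 2 * INR 8 < sum1 (8-1) (fun k => Fn (sin (INR k * PI / INR 8))).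
Proof.
  assert (T1 : 4.8432 <= Fn (sin (INR 1 * PI / INR 8))) by (apply term_lb with 0.38270; [lia|lia|chk|lra]).
  assert (T2 : 2.1209 <= Fn (sin (INR 2 * PI / INR 8))) by (apply term_lb with 0.70716; [lia|lia|chk|lra]).
  assert (T3 : 1.2386 <= Fn (sin (INR 3 * PI / INR 8))) by (apply term_lb with 0.92451; [lia|lia|chk|lra]).
  assert (T4 : 0.9862 <= Fn (sin (INR 4 * PI / INR 8))) by (apply term_lb with 1.00455; [lia|lia|chk|lra]).
  assert (T5 : 1.2386 <= Fn (sin (INR 5 * PI / INR 8))) by (apply term_lb_sym with 0.92451; [lia|lia|lia|chk|lra]).
  assert (T6 : 2.1209 <= Fn (sin (INR 6 * PI / INR 8))) by (apply term_lb_sym with 0.70716; [lia|lia|lia|chk|lra]).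
  assert (T7 : 4.8432 <= Fn (sin (INR 7 * PI / INR 8))) by (apply term_lb_sym with 0.38270; [lia|lia|lia|chk|lra]).
  assert (E : INR 8 = 8) by (rewrite INR_IZR_INZ; reflexivity).
  cbn [sum1 Nat.sub]. lra.
Qed.

Lemma even_small_9 : 2 * INR 9 < sum1 (9-1) (fun k => Fn (sin (INR k * PI / INR 9))).
Proof.
  assert (T1 : 5.5051 <= Fn (sin (INR 1 * PI / INR 9))) by (apply term_lb with 0.34204; [lia|lia|chk|lra]).
  assert (T2 : 2.4683 <= Fn (sin (INR 2 * PI / INR 9))) by (apply term_lb with 0.64282; [lia|lia|chk|lra]).
  assert (T3 : 1.4422 <= Fn (sin (INR 3 * PI / INR 9))) by (apply term_lb with 0.86631; [lia|lia|chk|lra]).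
  assert (T4 : 1.0397 <= Fn (sin (INR 4 * PI / INR 9))) by (apply term_lb with 0.98683; [lia|lia|chk|lra]).
  assert (T5 : 1.0397 <= Fn (sin (INR 5 * PI / INR 9))) by (apply term_lb_sym with 0.98683; [lia|lia|lia|chk|lra]).
  assert (T6 : 1.4422 <= Fn (sin (INR 6 * PI / INR 9))) by (apply term_lb_sym with 0.86631; [lia|lia|lia|chk|lra]).
  assert (T7 : 2.4683 <= Fn (sin (INR 7 * PI / INR 9))) by (apply term_lb_sym with 0.64282; [lia|lia|lia|chk|lra]).
  assert (T8 : 5.5051 <= Fn (sin (INR 8 * PI / INR 9))) by (apply term_lb_sym with 0.34204; [lia|lia|lia|chk|lra]).
  assert (E : INR 9 = 9) by (rewrite INR_IZR_INZ; reflexivity).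
  cbn [sum1 Nat.sub]. lra.
Qed.

Lemma even_small_10 : 2 * INR 10 < sum1 (10-1) (fun k => Fn (sin (INR k * PI / INR 10))).
Proof.
  assert (T1 : 6.1627 <= Fn (sin (INR 1 * PI / INR 10))) by (apply term_lb with 0.30903; [lia|lia|chk|lra]).
  assert (T2 : 2.8145 <= Fn (sin (INR 2 * PI / INR 10))) by (apply term_lb with 0.58781; [lia|lia|chk|lra]).
  assert (T3 : 1.6624 <= Fn (sin (INR 3 * PI / INR 10))) by (apply term_lb with 0.80916; [lia|lia|chk|lra]).
  assert (T4 : 1.1486 <= Fn (sin (INR 4 * PI / INR 10))) by (apply term_lb with 0.95204; [lia|lia|chk|lra]).
  assert (T5 : 0.9862 <= Fn (sin (INR 5 * PI / INR 10))) by (apply term_lb with 1.00455; [lia|lia|chk|lra]).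
  assert (T6 : 1.1486 <= Fn (sin (INR 6 * PI / INR 10))) by (apply term_lb_sym with 0.95204; [lia|lia|lia|chk|lra]).
  assert (T7 : 1.6624 <= Fn (sin (INR 7 * PI / INR 10))) by (apply term_lb_sym with 0.80916; [lia|lia|lia|chk|lra]).
  assert (T8 : 2.8145 <= Fn (sin (INR 8 * PI / INR 10))) by (apply term_lb_sym with 0.58781; [lia|lia|lia|chk|lra]).
  assert (T9 : 6.1627 <= Fn (sin (INR 9 * PI / INR 10))) by (apply term_lb_sym with 0.30903; [lia|lia|lia|chk|lra]).
  assert (E : INR 10 = 10) by (rewrite INR_IZR_INZ; reflexivity).
  cbn [sum1 Nat.sub]. lra.
Qed.

Lemma even_small_11 : 2 * INR 11 < sum1 (11-1) (fun k => Fn (sin (INR k * PI / INR 11))).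
Proof.
  assert (T1 : 6.8166 <= Fn (sin (INR 1 * PI / INR 11))) by (apply term_lb with 0.28175; [lia|lia|chk|lra]).
  assert (T2 : 3.1584 <= Fn (sin (INR 2 * PI / INR 11))) by (apply term_lb with 0.54066; [lia|lia|chk|lra]).
  assert (T3 : 1.8901 <= Fn (sin (INR 3 * PI / INR 11))) by (apply term_lb with 0.75583; [lia|lia|chk|lra]).
  assert (T4 : 1.2871 <= Fn (sin (INR 4 * PI / INR 11))) by (apply term_lb with 0.91015; [lia|lia|chk|lra]).
  assert (T5 : 1.0234 <= Fn (sin (INR 5 * PI / INR 11))) by (apply term_lb with 0.99218; [lia|lia|chk|lra]).
  assert (T6 : 1.0234 <= Fn (sin (INR 6 * PI / INR 11))) by (apply term_lb_sym with 0.99218; [lia|lia|lia|chk|lra]).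
  assert (T7 : 1.2871 <= Fn (sin (INR 7 * PI / INR 11))) by (apply term_lb_sym with 0.91015; [lia|lia|lia|chk|lra]).
  assert (T8 : 1.8901 <= Fn (sin (INR 8 * PI / INR 11))) by (apply term_lb_sym with 0.75583; [lia|lia|lia|chk|lra]).
  assert (T9 : 3.1584 <= Fn (sin (INR 9 * PI / INR 11))) by (apply term_lb_sym with 0.54066; [lia|lia|lia|chk|lra]).
  assert (T10 : 6.8166 <= Fn (sin (INR 10 * PI / INR 11))) by (apply term_lb_sym with 0.28175; [lia|lia|lia|chk|lra]).
  assert (E : INR 11 = 11) by (rewrite INR_IZR_INZ; reflexivity).
  cbn [sum1 Nat.sub]. lra.
Qed.

Lemma even_small_12 : 2 * INR 12 < sum1 (12-1) (fun k => Fn (sin (INR k * PI / INR 12))).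
Proof.
  assert (T1 : 7.4681 <= Fn (sin (INR 1 * PI / INR 12))) by (apply term_lb with 0.25883; [lia|lia|chk|lra]).
  assert (T2 : 3.4997 <= Fn (sin (INR 2 * PI / INR 12))) by (apply term_lb with 0.50002; [lia|lia|chk|lra]).
  assert (T3 : 2.1209 <= Fn (sin (INR 3 * PI / INR 12))) by (apply term_lb with 0.70716; [lia|lia|chk|lra]).
  assert (T4 : 1.4422 <= Fn (sin (INR 4 * PI / INR 12))) by (apply term_lb with 0.86631; [lia|lia|chk|lra]).
  assert (T5 : 1.1004 <= Fn (sin (INR 5 * PI / INR 12))) by (apply term_lb with 0.96722; [lia|lia|chk|lra]).
  assert (T6 : 0.9862 <= Fn (sin (INR 6 * PI / INR 12))) by (apply term_lb with 1.00455; [lia|lia|chk|lra]).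
  assert (T7 : 1.1004 <= Fn (sin (INR 7 * PI / INR 12))) by (apply term_lb_sym with 0.96722; [lia|lia|lia|chk|lra]).
  assert (T8 : 1.4422 <= Fn (sin (INR 8 * PI / INR 12))) by (apply term_lb_sym with 0.86631; [lia|lia|lia|chk|lra]).
  assert (T9 : 2.1209 <= Fn (sin (INR 9 * PI / INR 12))) by (apply term_lb_sym with 0.70716; [lia|lia|lia|chk|lra]).
  assert (T10 : 3.4997 <= Fn (sin (INR 10 * PI / INR 12))) by (apply term_lb_sym with 0.50002; [lia|lia|lia|chk|lra]).
  assert (T11 : 7.4681 <= Fn (sin (INR 11 * PI / INR 12))) by (apply term_lb_sym with 0.25883; [lia|lia|lia|chk|lra]).
  assert (E : INR 12 = 12) by (rewrite INR_IZR_INZ; reflexivity).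
  cbn [sum1 Nat.sub]. lra.
Qed.

Lemma even_small_13 : 2 * INR 13 < sum1 (13-1) (fun k => Fn (sin (INR k * PI / INR 13))).
Proof.
  assert (T1 : 8.1172 <= Fn (sin (INR 1 * PI / INR 13))) by (apply term_lb with 0.23933; [lia|lia|chk|lra]).
  assert (T2 : 3.8386 <= Fn (sin (INR 2 * PI / INR 13))) by (apply term_lb with 0.46474; [lia|lia|chk|lra]).
  assert (T3 : 2.3526 <= Fn (sin (INR 3 * PI / INR 13))) by (apply term_lb with 0.66316; [lia|lia|chk|lra]).
  assert (T4 : 1.6064 <= Fn (sin (INR 4 * PI / INR 13))) by (apply term_lb with 0.82316; [lia|lia|chk|lra]).
  assert (T5 : 1.2014 <= Fn (sin (INR 5 * PI / INR 13))) by (apply term_lb with 0.93577; [lia|lia|chk|lra]).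
  assert (T6 : 1.0139 <= Fn (sin (INR 6 * PI / INR 13))) by (apply term_lb with 0.99533; [lia|lia|chk|lra]).
  assert (T7 : 1.0139 <= Fn (sin (INR 7 * PI / INR 13))) by (apply term_lb_sym with 0.99533; [lia|lia|lia|chk|lra]).
  assert (T8 : 1.2014 <= Fn (sin (INR 8 * PI / INR 13))) by (apply term_lb_sym with 0.93577; [lia|lia|lia|chk|lra]).
  assert (T9 : 1.6064 <= Fn (sin (INR 9 * PI / INR 13))) by (apply term_lb_sym with 0.82316; [lia|lia|lia|chk|lra]).
  assert (T10 : 2.3526 <= Fn (sin (INR 10 * PI / INR 13))) by (apply term_lb_sym with 0.66316; [lia|lia|lia|chk|lra]).
  assert (T11 : 3.8386 <= Fn (sin (INR 11 * PI / INR 13))) by (apply term_lb_sym with 0.46474; [lia|lia|lia|chk|lra]).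
  assert (T12 : 8.1172 <= Fn (sin (INR 12 * PI / INR 13))) by (apply term_lb_sym with 0.23933; [lia|lia|lia|chk|lra]).
  assert (E : INR 13 = 13) by (rewrite INR_IZR_INZ; reflexivity).
  cbn [sum1 Nat.sub]. lra.
Qed.

Lemma even_small_14 : 2 * INR 14 < sum1 (14-1) (fun k => Fn (sin (INR k * PI / INR 14))).
Proof.
  assert (T1 : 8.7645 <= Fn (sin (INR 1 * PI / INR 14))) by (apply term_lb with 0.22254; [lia|lia|chk|lra]).
  assert (T2 : 4.1753 <= Fn (sin (INR 2 * PI / INR 14))) by (apply term_lb with 0.43390; [lia|lia|chk|lra]).
  assert (T3 : 2.5839 <= Fn (sin (INR 3 * PI / INR 14))) by (apply term_lb with 0.62352; [lia|lia|chk|lra]).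
  assert (T4 : 1.7757 <= Fn (sin (INR 4 * PI / INR 14))) by (apply term_lb with 0.78194; [lia|lia|chk|lra]).
  assert (T5 : 1.3172 <= Fn (sin (INR 5 * PI / INR 14))) by (apply term_lb with 0.90142; [lia|lia|chk|lra]).
  assert (T6 : 1.0715 <= Fn (sin (INR 6 * PI / INR 14))) by (apply term_lb with 0.97650; [lia|lia|chk|lra]).
  assert (T7 : 0.9862 <= Fn (sin (INR 7 * PI / INR 14))) by (apply term_lb with 1.00455; [lia|lia|chk|lra]).
  assert (T8 : 1.0715 <= Fn (sin (INR 8 * PI / INR 14))) by (apply term_lb_sym with 0.97650; [lia|lia|lia|chk|lra]).
  assert (T9 : 1.3172 <= Fn (sin (INR 9 * PI / INR 14))) by (apply term_lb_sym with 0.90142; [lia|lia|lia|chk|lra]).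
  assert (T10 : 1.7757 <= Fn (sin (INR 10 * PI / INR 14))) by (apply term_lb_sym with 0.78194; [lia|lia|lia|chk|lra]).
  assert (T11 : 2.5839 <= Fn (sin (INR 11 * PI / INR 14))) by (apply term_lb_sym with 0.62352; [lia|lia|lia|chk|lra]).
  assert (T12 : 4.1753 <= Fn (sin (INR 12 * PI / INR 14))) by (apply term_lb_sym with 0.43390; [lia|lia|lia|chk|lra]).
  assert (T13 : 8.7645 <= Fn (sin (INR 13 * PI / INR 14))) by (apply term_lb_sym with 0.22254; [lia|lia|lia|chk|lra]).
  assert (E : INR 14 = 14) by (rewrite INR_IZR_INZ; reflexivity).
  cbn [sum1 Nat.sub]. lra.
Qed.

Lemma even_est j : (7 <= j)%nat -> 2 * INR j < sum1 (j-1) (fun k => Fn (sin (INR k * PI / INR j))).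
Proof.
  intros Hj. destruct (Nat.le_gt_cases 15 j) as [H|H].
  - apply even_general; exact H.
  - assert (j = 7 \/ j = 8 \/ j = 9 \/ j = 10 \/ j = 11 \/ j = 12 \/ j = 13 \/ j = 14)%nat as E by lia.
    destruct E as [E|[E|[E|[E|[E|[E|[E|E]]]]]]]; subst j.
    + apply even_small_7. + apply even_small_8. + apply even_small_9. + apply even_small_10.
    + apply even_small_11. + apply even_small_12. + apply even_small_13. + apply even_small_14.
Qed.
Lemma odd_est j : (5 <= j)%nat -> 2 * INR j < sum1 j (fun k => Fn (sin ((2 * INR k - 1) * PI / INR j / 2))).
Proof. apply odd_general. Qed.

Lemma chi_pos mu1 mu2 A B C : 0 < mu1 -> 0 < mu2 -> 0 < A -> 0 < B ->
  0 < A + B - C -> 0 < A + B + C ->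
  0 < mu1 * mu2 * (A ^ 2 + B ^ 2 - C ^ 2) + (mu1 ^ 2 + mu2 ^ 2) * A * B.
Proof.
  intros. replace (mu1 * mu2 * (A ^ 2 + B ^ 2 - C ^ 2) + (mu1 ^ 2 + mu2 ^ 2) * A * B)
    with (mu1 * mu2 * ((A + B - C) * (A + B + C)) + (mu1 - mu2)^2 * (A * B)) by ring.
  assert (0 < mu1 * mu2 * ((A + B - C) * (A + B + C))).
  { apply Rmult_lt_0_compat; apply Rmult_lt_0_compat; lra. }
  assert (0 <= (mu1 - mu2)^2 * (A * B)).
  { apply Rmult_le_pos; [apply pow2_ge_0| apply Rmult_le_pos; lra]. }
  lra.
Qed.

Lemma cos0sum n (y : nat -> R) : sum1 n (fun k => cos (INR 0 * y k)) = INR n.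
Proof.
  rewrite (sum1_ext _ _ (fun _ => 1)). - rewrite sum1_const; ring.
  - intros; change (INR 0) with 0; rewrite Rmult_0_l; apply cos_0.
Qed.

Lemma ab_range a b : 0 < a -> a < b -> 0 < a * PI / b < PI.
Proof. intros. split; [apply frac_pos | apply frac_lt_PI]; lra. Qed.

Theorem mainTheorem7 (j : nat) (mu1 mu2 : R) :
  (7 <= j)%nat -> 0 < mu1 -> 0 < mu2 ->
  forall l : nat, (2 <= l)%nat -> (l <= (j + 1) / 2)%nat ->
    0 < g1 j l /\ 0 < chi mu1 mu2 j l.
Proof.
  intros Hj Hm1 Hm2 l Hl Hlj2.
  assert (Hlj : (2 * l <= j + 1)%nat).
  { pose proof (Nat.div_mod (j+1) 2). pose proof (Nat.mod_upper_bound (j+1) 2). lia. }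
  assert (Hlj' : (l < j)%nat) by lia.
  assert (Hj0 : 0 < INR j) by (apply lt_0_INR; lia).
  assert (Hth : forall k, (1 <= k <= j)%nat -> 0 < sin ((2 * INR k - 1) * PI / INR j / 2)).
  { intros k Hk. assert (1 <= INR k) by (apply (le_INR 1); lia).
    assert (INR k <= INR j) by (apply le_INR; lia).
    replace ((2 * INR k - 1) * PI / INR j / 2) with ((2 * INR k - 1) * PI / (2 * INR j)) by (field; lra).
    apply sin_gt_0; apply ab_range; lra. }
  assert (Hx : forall k, (1 <= k <= j - 1)%nat -> 0 < sin (2 * INR k * PI / INR j / 2)).
  { intros k Hk. replace (2 * INR k * PI / INR j / 2) with (INR k * PI / INR j) by (field; lra).
    apply sin_qj_pos. lia. }
  assert (Hhth : forall k, (1 <= k <= j)%nat -> 0 < h ((2 * INR k - 1) * PI / INR j)).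
  { intros k Hk. apply h_pos. specialize (Hth k Hk). lra. }
  assert (Hhx : forall k, (1 <= k <= j - 1)%nat -> 0 < h (2 * INR k * PI / INR j)).
  { intros k Hk. apply h_pos. specialize (Hx k Hk). lra. }
  pose proof (sumA 1 j ltac:(lia)) as A1.
  pose proof (sumA l j ltac:(lia)) as Al.
  pose proof (sumB 1 j ltac:(lia)) as B1.
  pose proof (sumB l j ltac:(lia)) as Bl.
  pose proof (g1_split j l Hl Hlj') as G1.
  pose proof (g2_split j) as G2.
  pose proof (g3_split j l Hl Hlj') as G3.
  cbv beta zeta in G1, G2, G3.
  rewrite A1, Al in G1. rewrite B1 in G2. rewrite Bl in G3.
  assert (Pg2 : 0 < g2 j).
  { rewrite G2. rewrite Rplus_0_r. apply sum1_pos; [lia| |].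
    - intros k Hk. left. apply Hhth. lia.
    - apply Hhth. lia. }
  unfold chi.
  destruct (Nat.eq_dec l 2) as [E|E].
  - subst l. simpl (2 - 2)%nat in G1, G3.
    rewrite cos0sum in G1, G3.
    replace (INR 2 - 1) with 1 in G1, G3 by (simpl; ring).
    rewrite minus_INR in G1 by lia. change (INR 1) with 1 in G1.
    rewrite (sum1_ext _ _ (fun k => Fn (sin (INR k * PI / INR j)) / 4)) in G1.
    2:{ intros k Hk. rewrite Rmult_1_l. rewrite h_1mcos by (apply Hx; lia).
        f_equal. f_equal. f_equal. field. lra. }
    rewrite (sum1_ext _ _ (fun k => / 4 * Fn (sin (INR k * PI / INR j)))) in G1
      by (intros; unfold Rdiv; ring).
    rewrite sum1_scal in G1.
    pose proof (even_est j Hj) as EE.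
    assert (P1 : 0 < g1 j 2) by (rewrite G1; lra).
    split; [exact P1|].
    assert (D1 : g2 j - g3 j 2 = / 4 * sum1 j (fun k => Fn (sin ((2 * INR k - 1) * PI / INR j / 2))) - INR j / 2).
    { rewrite G2, G3. rewrite <- sum1_scal.
      replace (sum1 j (fun k => / 4 * Fn (sin ((2 * INR k - 1) * PI / INR j / 2))))
        with (sum1 j (fun k => h ((2 * INR k - 1) * PI / INR j)) - sum1 j (fun k => h ((2 * INR k - 1) * PI / INR j) * cos (1 * ((2 * INR k - 1) * PI / INR j)))).
      - lra.
      - rewrite <- sum1_minus. apply sum1_ext. intros k Hk. rewrite Rmult_1_l.
        replace (h ((2 * INR k - 1) * PI / INR j) - h ((2 * INR k - 1) * PI / INR j) * cos ((2 * INR k - 1) * PI / INR j))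
          with (h ((2 * INR k - 1) * PI / INR j) * (1 - cos ((2 * INR k - 1) * PI / INR j))) by ring.
        rewrite h_1mcos by (apply Hth; lia). unfold Rdiv; apply Rmult_comm. }
    assert (D2 : 0 < g2 j + g3 j 2).
    { rewrite G2, G3. rewrite Rplus_0_r.
      assert (0 <= sum1 j (fun k => h ((2 * INR k - 1) * PI / INR j) * (1 + cos (1 * ((2 * INR k - 1) * PI / INR j))))).
      { apply sum1_nonneg. intros k Hk. rewrite Rmult_1_l. apply h_1pcos. specialize (Hth k Hk). lra. }
      rewrite (sum1_ext _ _ (fun k => h ((2 * INR k - 1) * PI / INR j) + h ((2 * INR k - 1) * PI / INR j) * cos (1 * ((2 * INR k - 1) * PI / INR j)))) in H by (intros; ring).
      rewrite sum1_plus in H. lra. }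
    pose proof (odd_est j ltac:(lia)) as OE.
    apply chi_pos; auto; lra.
  - assert (Hl3 : (3 <= l)%nat) by lia.
    pose proof (sumA (l-2) j ltac:(lia)) as A2.
    pose proof (sumB (l-2) j ltac:(lia)) as B2.
    rewrite A2 in G1. rewrite B2 in G3.
    assert (P1 : 0 < g1 j l).
    { rewrite G1. cut (0 < sum1 (j - 1) (fun k => h (2 * INR k * PI / INR j) * (1 - cos ((INR l - 1) * (2 * INR k * PI / INR j))))); [lra|].
      apply sum1_pos; [lia| |].
      - intros k Hk. apply Rmult_le_pos; [left; apply Hhx; lia|].
        pose proof (COS_bound ((INR l - 1) * (2 * INR k * PI / INR j))). lra.
      - apply Rmult_lt_0_compat; [apply Hhx; lia|].
        rewrite one_m_cos.
        assert (0 < sin ((INR l - 1) * (2 * INR 1 * PI / INR j) / 2)).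
        { replace ((INR l - 1) * (2 * INR 1 * PI / INR j) / 2) with (INR (l - 1) * PI / INR j)
            by (rewrite minus_INR by lia; simpl; field; lra).
          apply sin_qj_pos; lia. }
        nra. }
    split; [exact P1|].
    assert (C1 : forall k, (1 <= k <= j)%nat -> - h ((2 * INR k - 1) * PI / INR j) <= h ((2 * INR k - 1) * PI / INR j) * cos ((INR l - 1) * ((2 * INR k - 1) * PI / INR j)) <= h ((2 * INR k - 1) * PI / INR j)).
    { intros k Hk.
      pose proof (Hhth k Hk). pose proof (COS_bound ((INR l - 1) * ((2 * INR k - 1) * PI / INR j))).
      split; nra. }
    assert (U : g3 j l <= g2 j).
    { rewrite G2, G3. rewrite !Rmult_0_r, !Rplus_0_r. apply sum1_le.
      intros k Hk. specialize (C1 k Hk). lra. }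
    assert (L : - g2 j <= g3 j l).
    { rewrite G2, G3. rewrite !Rmult_0_r, !Rplus_0_r.
      assert (sum1 j (fun k => -1 * h ((2 * INR k - 1) * PI / INR j)) <= sum1 j (fun k => h ((2 * INR k - 1) * PI / INR j) * cos ((INR l - 1) * ((2 * INR k - 1) * PI / INR j)))).
      { apply sum1_le. intros k Hk. specialize (C1 k Hk). lra. }
      rewrite sum1_scal in H. lra. }
    apply chi_pos; auto; lra.
Qed.
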